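(* For every positive integer $m$ and every nonempty proper subset $S\subseteq[n]$ there is a two-outcome projective measurement $\{\Pi_S,\overline{\Pi}_S\}$ on $2m$ copies of an $n$-qubit system with the following property. Let $C\subseteq[n]$ be nonempty proper and let $\ket{\psi}=\ket{a}_C\otimes\ket{b}_{\overline{C}}$, where $\ket{a}_C$ and $\ket{b}_{\overline{C}}$ are each $\epsilon$-far from every multipartite product state. If $\ket{\psi}^{\otimes 2m}$ is measured with $\{\Pi_S,\overline{\Pi}_S\}$, then the outcome $\Pi_S$ (''accept'') occurs with probability $1$ if $S=C$ or $S=\overline{C}$, and with probability at most $\exp(-\epsilon^2 m/2)$ if $S\ne C,\overline{C}$.
   Context: A state on a set $Q$ of qubits is multipartite product if it equals $\ket{a'}_D\otimes\ket{b'}_{Q\setminus D}$ for some nonempty proper $D\subsetneq Q$; a pure state $\ket{\phi}$ is $\epsilon$-far from a set $\mathcal{P}$ if $|\langle\phi|\chi\rangle|^2\le1-\epsilon^2$ for all $\ket{\chi}\in\mathcal{P}$. $\overline{C}=[n]\setminus C$. *)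

(* Defs.v *)
From mathcomp Require Import all_boot all_algebra complex.
From mathcomp Require Import reals.
From mathcomp Require Import sequences exp.
Import GRing.Theory Num.Theory.
Set Implicit Arguments. Unset Strict Implicit. Unset Printing Implicit Defensive.
Local Open Scope ring_scope.

(* Computational basis configurations of an n-qubit register. *)
Definition conf (n : nat) := {ffun 'I_n -> bool}.

Definition restr n (D : {set 'I_n}) (x : conf n) : conf n :=
  [ffun i => (i \in D) && x i].

(* A vector on the qubits of Q is encoded as a function on full configurations
   that vanishes on configurations which are nonzero outside Q. *)
Definition supported (R : realType) n (Q : {set 'I_n}) (v : conf n -> R[i]) :=
  forall x, restr Q x != x -> v x = 0.

Definition dotp (R : realType) n (u v : conf n -> R[i]) : R[i] :=
  \sum_(x : conf n) (u x)^* * v x.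

Definition pure_state (R : realType) n (Q : {set 'I_n}) (v : conf n -> R[i]) :=
  supported Q v /\ dotp v v = 1.

(* Tensor product |u>_D (x) |w>_E of vectors on disjoint sets D, E. *)
Definition tens (R : realType) n (D E : {set 'I_n}) (u w : conf n -> R[i])
  : conf n -> R[i] :=
  fun x => if restr (D :|: E) x == x then u (restr D x) * w (restr E x) else 0.

Definition multipartite_product (R : realType) n (Q : {set 'I_n})
  (chi : conf n -> R[i]) :=
  pure_state Q chi /\
  exists D : {set 'I_n}, [/\ D != set0, D \proper Q &
    exists a' b', [/\ pure_state D a', pure_state (Q :\: D) b' &
      chi = tens D (Q :\: D) a' b']].

Definition far_from_mp (R : realType) n (Q : {set 'I_n}) (eps : R)
  (phi : conf n -> R[i]) :=
  forall chi, multipartite_product Q chi ->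
    `|dotp phi chi| ^+ 2 <= ((1 - eps ^+ 2)%:C)%C.

Definition copies (n k : nat) := {ffun 'I_k -> conf n}.

Definition tensor_power (R : realType) n k (psi : conf n -> R[i])
  : copies n k -> R[i] := fun y => \prod_(j < k) psi (y j).

Definition operator (R : realType) n k := copies n k -> copies n k -> R[i].

(* Orthogonal projector: Hermitian and idempotent.  Its complement 1 - P is
   then also a projector, so {P, 1 - P} is a two-outcome projective measurement. *)
Definition projector (R : realType) n k (P : operator R n k) :=
  (forall y z, P y z = (P z y)^*) /\
  (forall y w, \sum_(z : copies n k) P y z * P z w = P y w).

Definition outcome_prob (R : realType) n k (P : operator R n k)
  (Phi : copies n k -> R[i]) : R[i] :=
  \sum_(y : copies n k) \sum_(z : copies n k) (Phi y)^* * P y z * Phi z.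

(* Main.v *)
Require Import Defs.
From mathcomp Require Import all_boot all_algebra complex.
From mathcomp Require Import reals.
From mathcomp Require Import sequences exp.
From mathcomp Require Import all_order ring.
Import Order.TTheory GRing.Theory Num.Theory.
Set Implicit Arguments. Unset Strict Implicit. Unset Printing Implicit Defensive.
Local Open Scope ring_scope.


Section Gen.
Variable C : numClosedFieldType.

Definition sq (z : C) := z * z^*.

Lemma sq_ge0 z : 0 <= sq z. Proof. exact: mul_conjC_ge0. Qed.
Lemma sq_conj z : (sq z)^* = sq z.
Proof. by rewrite /sq rmorphM /= conjCK mulrC. Qed.
Lemma sq_eq0 z : (sq z == 0) = (z == 0).
Proof. by rewrite /sq mulf_eq0 conjC_eq0 orbb. Qed.

Lemma sumsq_ge0 (K : finType) (x : K -> C) : 0 <= \sum_k sq (x k).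
Proof. by apply: sumr_ge0 => k _; apply: sq_ge0. Qed.

Lemma sumsq_eq0 (K : finType) (x : K -> C) : \sum_k sq (x k) = 0 -> forall k, x k = 0.
Proof.
move=> /eqP; rewrite psumr_eq0; last by move=> k _; apply: sq_ge0.
by move=> /allP H k; apply/eqP; rewrite -sq_eq0; apply: (H k); rewrite mem_index_enum.
Qed.

Lemma ge0_conj (z : C) : 0 <= z -> z^* = z.
Proof. by move=> h; apply/CrealP; apply: ger0_real. Qed.

Lemma CS (K : finType) (x y : K -> C) :
  sq (\sum_k x k * y k) <= (\sum_k sq (x k)) * (\sum_k sq (y k)).
Proof.
set c := \sum_k x k * y k; set A := \sum_k sq (x k); set B := \sum_k sq (y k).
have B0 : 0 <= B by apply: sumsq_ge0.
have [Be0|Bn0] := eqVneq B 0.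
  have y0 := sumsq_eq0 Be0.
  have -> : c = 0 by rewrite /c big1 // => k _; rewrite y0 mulr0.
  by rewrite /sq mul0r Be0 mulr0.
have Bp : 0 < B by rewrite lt0r Bn0.
have H : 0 <= \sum_k sq (B * x k - c * (y k)^*) by apply: sumsq_ge0.
have E : \sum_k sq (B * x k - c * (y k)^*) = B * (B * A - sq c).
  have BC : B^* = B by apply: ge0_conj.
  rewrite (eq_bigr (fun k => B * B * sq (x k) - B * c^* * (x k * y k)
                 - B * c * ((x k)^* * (y k)^*) + sq c * sq (y k))); last first.
    by move=> k _; rewrite /sq rmorphB /= !rmorphM /= BC conjCK; ring.
  rewrite !big_split /= !sumrN -!mulr_sumr -/A -/B.
  have -> : \sum_k (x k)^* * (y k)^* = c^*.
    by rewrite /c rmorph_sum /=; apply: eq_bigr => k _; rewrite rmorphM.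
  rewrite -/c /sq; ring.
move: H; rewrite E pmulr_rge0 // subr_ge0 => H.
by rewrite mulrC.
Qed.

End Gen.


Section Key.
Variable C : numClosedFieldType.
Variables I J : finType.
Variable A : I -> J -> C.
Hypothesis N : \sum_s \sum_t sq (A s t) = 1.

Definition rho s s' := \sum_t A s t * (A s' t)^*.
Definition pur := \sum_s \sum_t \sum_s' \sum_t'
   (A s t)^* * (A s' t')^* * A s' t * A s t'.
Definition wt i := \sum_s sq (rho s i).
Definition Zv i t := \sum_s (A s t)^* * rho s i.
Definition rt i := \sum_t sq (Zv i t).

Lemma rho_conj s s' : (rho s s')^* = rho s' s.
Proof.
rewrite /rho rmorph_sum /=; apply: eq_bigr => t _.
by rewrite rmorphM /= conjCK mulrC.
Qed.

Lemma pur_w : pur = \sum_i wt i.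
Proof.
rewrite /wt /pur [RHS]exchange_big /=.
apply: eq_bigr => s _.
rewrite exchange_big /=; apply: eq_bigr => i _.
rewrite /sq rho_conj /rho mulr_suml.
under [RHS]eq_bigr => t _ do rewrite mulr_sumr.
rewrite [RHS]exchange_big /=; apply: eq_bigr => t _.
apply: eq_bigr => t' _.
by ring.
Qed.

Lemma wt_ge0 i : 0 <= wt i. Proof. exact: sumsq_ge0. Qed.
Lemma rt_ge0 i : 0 <= rt i. Proof. exact: sumsq_ge0. Qed.
Lemma pur_ge0 : 0 <= pur.
Proof. by rewrite pur_w; apply: sumr_ge0 => i _; apply: wt_ge0. Qed.

Lemma pur_AZ : pur = \sum_i \sum_t A i t * Zv i t.
Proof.
rewrite pur_w; apply: eq_bigr => i _.
rewrite /wt /Zv.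
under [RHS]eq_bigr => t _ do rewrite mulr_sumr.
rewrite [RHS]exchange_big /=; apply: eq_bigr => s _.
rewrite /sq rho_conj [rho i s]/rho mulr_sumr; apply: eq_bigr => t _.
by ring.
Qed.

Lemma pur_sq_le : pur * pur <= \sum_i rt i.
Proof.
have := CS (fun p : I * J => A p.1 p.2) (fun p => Zv p.1 p.2).
rewrite -(pair_bigA _ (fun i t => A i t * Zv i t)) -(pair_bigA _ (fun i t => sq (A i t))).
rewrite -(pair_bigA _ (fun i t => sq (Zv i t))) /= -pur_AZ N mul1r.
by rewrite /sq ge0_conj //; apply: pur_ge0.
Qed.

Lemma wt0_rt0 i : wt i = 0 -> rt i = 0.
Proof.
move=> /sumsq_eq0 h; rewrite /rt big1 // => t _.
by rewrite /Zv big1 ?/sq ?mul0r // => s _; rewrite h mulr0.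
Qed.

Lemma pur_diag : \sum_s rho s s = 1.
Proof. by rewrite -N; apply: eq_bigr. Qed.

Lemma ex_w_pos : exists i, 0 < wt i.
Proof.
case/boolP: [exists i, 0 < wt i] => [/existsP //|/existsPn H]; exfalso.
have w0 i : wt i = 0.
  apply/eqP; rewrite eq_le wt_ge0 andbT.
  by rewrite real_leNgt ?H // ?ger0_real ?wt_ge0 // realE lexx.
have : \sum_s rho s s = 0.
  by apply: big1 => s _; have := sumsq_eq0 (w0 s); move/(_ s).
by rewrite pur_diag; move/eqP; rewrite oner_eq0.
Qed.

Lemma w_le_pur i : wt i <= pur.
Proof.
rewrite pur_w (bigD1 i) //= ler_wpDr //.
by apply: sumr_ge0 => j _; apply: wt_ge0.
Qed.

Lemma ex_good : exists i, 0 < wt i /\ pur * wt i <= rt i.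
Proof.
case/boolP: [exists i, (0 < wt i) && (pur * wt i <= rt i)].
  by move=> /existsP [i /andP [h1 h2]]; exists i.
move=> /existsPn H; exfalso.
have [i0 wi0] := ex_w_pos.
have Hle i : rt i <= pur * wt i.
  have [w0|wn0] := eqVneq (wt i) 0.
    by rewrite wt0_rt0 // w0 mulr0.
  have wp : 0 < wt i by rewrite lt0r wn0 wt_ge0.
  move: (H i); rewrite wp /= => /negP hn.
  apply/ltW; rewrite real_ltNge ?ger0_real ?rt_ge0 ?mulr_ge0 ?pur_ge0 ?wt_ge0 //.
  by apply/negP.
have Hlt : rt i0 < pur * wt i0.
  move: (H i0); rewrite wi0 /= => hn.
  rewrite real_ltNge ?ger0_real ?rt_ge0 ?mulr_ge0 ?pur_ge0 ?wt_ge0 //.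
have : \sum_i rt i < pur * pur.
  rewrite {2}pur_w mulr_sumr (bigD1 i0) //= [X in _ < X](bigD1 i0) //=.
  by apply: ltr_leD => //; apply: ler_sum => i _; apply: Hle.
by move=> h; have := lt_le_trans h pur_sq_le; rewrite ltxx.
Qed.

Lemma key : exists (X : I -> C) (Y : J -> C),
  [/\ \sum_s sq (X s) = 1, \sum_t sq (Y t) = 1,
      (forall s, (forall t, A s t = 0) -> X s = 0),
      (forall t, (forall s, A s t = 0) -> Y t = 0) &
      pur <= sq (\sum_s \sum_t (A s t)^* * X s * Y t)].
Proof.
have [i [wp Hr]] := ex_good.
have Tp : 0 < pur by apply: lt_le_trans wp (w_le_pur i).
have rp : 0 < rt i by apply: lt_le_trans Hr; apply: mulr_gt0.
set al := sqrtC (wt i); set be := sqrtC (rt i).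
have alp : 0 < al by rewrite sqrtC_gt0.
have bep : 0 < be by rewrite sqrtC_gt0.
have alc : al^* = al by apply: ge0_conj; apply: ltW.
have bec : be^* = be by apply: ge0_conj; apply: ltW.
have al2 : al * al = wt i by rewrite -expr2 sqrtCK.
have be2 : be * be = rt i by rewrite -expr2 sqrtCK.
have aln : al != 0 by rewrite gt_eqF.
have ben : be != 0 by rewrite gt_eqF.
exists (fun s => rho s i / al), (fun t => (Zv i t)^* / be); split.
- rewrite /sq.
  under eq_bigr => s _ do rewrite rmorphM /= rmorphV ?unitfE //= alc.
  rewrite -[RHS](divff (lt0r_neq0 wp)) -[X in _ / X]al2 /wt /sq mulr_suml.
  apply: eq_bigr => s _; field; exact: aln.
- rewrite /sq.
  under eq_bigr => t _ do rewrite rmorphM /= rmorphV ?unitfE //= bec conjCK.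
  rewrite -[RHS](divff (lt0r_neq0 rp)) -[X in _ / X]be2 /rt /sq mulr_suml.
  apply: eq_bigr => s _; field; exact: ben.
- by move=> s h; rewrite /rho big1 ?mul0r // => t _; rewrite h mul0r.
- move=> t h; rewrite /Zv big1 ?rmorph0 ?mul0r // => s _.
  by rewrite h rmorph0 mul0r.
have -> : \sum_s \sum_t (A s t)^* * (rho s i / al) * ((Zv i t)^* / be)
    = rt i / (al * be).
  rewrite exchange_big /= /rt mulr_suml; apply: eq_bigr => t _.
  rewrite /Zv /sq mulr_suml mulr_suml; apply: eq_bigr => s _.
  by field; rewrite aln ben.
rewrite /sq rmorphM /= rmorphV ?unitfE ?mulf_neq0 //= rmorphM /= alc bec.
rewrite ge0_conj ?rt_ge0 //.
have -> : rt i / (al * be) * (rt i / (al * be)) = rt i / wt i.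
  rewrite -al2 -be2; field; rewrite aln ben //.
by rewrite ler_pdivlMr.
Qed.

Lemma sqM (x y : C) : sq (x * y) = sq x * sq y.
Proof. by rewrite /sq rmorphM /=; ring. Qed.
Lemma sqC (x : C) : sq (x^*) = sq x.
Proof. by rewrite /sq conjCK mulrC. Qed.

Lemma pur_le1 : pur <= 1.
Proof.
have [X [Y [hX hY _ _ hp]]] := key.
apply: le_trans hp _.
have := CS (fun p : I * J => (A p.1 p.2)^*) (fun p => X p.1 * Y p.2).
rewrite -(pair_bigA _ (fun s t => (A s t)^* * (X s * Y t))).
rewrite -(pair_bigA _ (fun s t => sq ((A s t)^*))).
rewrite -(pair_bigA _ (fun s t => sq (X s * Y t))) /=.
have e1 : \sum_s \sum_t sq ((A s t)^*) = 1.
  by rewrite -N; apply: eq_bigr => s _; apply: eq_bigr => t _; rewrite sqC.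
have e2 : \sum_s \sum_t sq (X s * Y t) = 1.
  rewrite -[1]mulr1 -{1}hX -hY big_distrlr /=.
  by apply: eq_bigr => s _; apply: eq_bigr => t _; rewrite sqM.
have e3 : \sum_s \sum_t (A s t)^* * (X s * Y t) = \sum_s \sum_t (A s t)^* * X s * Y t.
  by apply: eq_bigr => s _; apply: eq_bigr => t _; rewrite mulrA.
by rewrite e1 e2 e3 mulr1.
Qed.

End Key.


Section Conf.
Variable n : nat.
Implicit Types (x y u v s t : conf n) (D G Q S : {set 'I_n}).

Definition supp Q x := restr Q x == x.
Definition uni x y : conf n := [ffun i => x i || y i].
Definition mix S u v : conf n := [ffun i => if i \in S then v i else u i].

Lemma suppP Q x : reflect (forall i, i \notin Q -> x i = false) (supp Q x).
Proof.
apply: (iffP eqP) => [e i hi|h].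
  by rewrite -e ffunE (negbTE hi).
by apply/ffunP => i; rewrite ffunE; case: (boolP (i \in Q)) => //= /h ->.
Qed.

Lemma supp_restr Q x : supp Q (restr Q x).
Proof. by apply/suppP => i /negbTE hi; rewrite ffunE hi. Qed.

Lemma restr_uni D G s t : [disjoint D & G] -> supp D s -> supp G t ->
  restr D (uni s t) = s /\ restr G (uni s t) = t.
Proof.
move=> dis /suppP hs /suppP ht; split; apply/ffunP => i; rewrite !ffunE.
- case: (boolP (i \in D)) => iD /=; last by rewrite hs.
  have iG : i \notin G by rewrite (disjointFr dis iD).
  by rewrite (ht _ iG) orbF.
- case: (boolP (i \in G)) => iG /=; last by rewrite ht.
  have iD : i \notin D by rewrite (disjointFl dis iG).
  by rewrite (hs _ iD).
Qed.

Lemma supp_uni D G s t : supp D s -> supp G t -> supp (D :|: G) (uni s t).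
Proof.
move=> /suppP hs /suppP ht; apply/suppP => i; rewrite in_setU negb_or.
by case/andP => /hs h1 /ht h2; rewrite ffunE h1 h2.
Qed.

Lemma uni_restr D G x : supp (D :|: G) x -> uni (restr D x) (restr G x) = x.
Proof.
move=> /suppP h; apply/ffunP => i; rewrite !ffunE.
have := h i; rewrite in_setU.
by case: (i \in D); case: (i \in G); case: (x i) => //= ->.
Qed.

Variable R : realType.

Lemma split_sum D G (F : conf n -> R[i]) : [disjoint D & G] ->
  \sum_(x | supp (D :|: G) x) F x =
  \sum_(s | supp D s) \sum_(t | supp G t) F (uni s t).
Proof.
move=> dis.
rewrite (reindex_onto (fun p : conf n * conf n => uni p.1 p.2)
           (fun x => (restr D x, restr G x))); last by move=> x /uni_restr.
rewrite pair_big /=; apply: eq_bigl => [[s t]] /=.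
apply/andP/andP => [[_ /eqP [<- <-]]|[hs ht]]; first by rewrite !supp_restr.
have [-> ->] := restr_uni dis hs ht.
by rewrite supp_uni.
Qed.

Lemma sum_supp (P : pred (conf n)) (F : conf n -> R[i]) :
  (forall x, ~~ P x -> F x = 0) -> \sum_x F x = \sum_(x | P x) F x.
Proof.
move=> h; rewrite [RHS]big_mkcond; apply: eq_bigr => x _.
by case: ifP => // /negbT /h.
Qed.

Definition purS S (phi : conf n -> R[i]) :=
  \sum_u \sum_v (phi u)^* * (phi v)^* * phi (mix S u v) * phi (mix S v u).

Lemma supported0 Q (phi : conf n -> R[i]) x :
  supported Q phi -> ~~ supp Q x -> phi x = 0.
Proof. by move=> h; apply: h. Qed.

Lemma mix_sub Q S u v : Q \subset S -> supp Q u -> supp Q v -> mix S u v = v.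
Proof.
move=> /subsetP sQS /suppP hu /suppP hv; apply/ffunP => i; rewrite ffunE.
case: ifP => // /negbT iS.
have iQ : i \notin Q by apply: contra iS; apply: sQS.
by rewrite hu ?hv.
Qed.

Lemma mix_dis Q S u v : [disjoint Q & S] -> supp Q u -> supp Q v -> mix S u v = u.
Proof.
move=> dis /suppP hu /suppP hv; apply/ffunP => i; rewrite ffunE.
case: ifP => // iS.
have iQ : i \notin Q by rewrite (disjointFl dis iS).
by rewrite hu ?hv.
Qed.

Lemma purS_triv Q S (phi : conf n -> R[i]) : supported Q phi ->
  (Q \subset S \/ [disjoint Q & S]) -> purS S phi = dotp phi phi * dotp phi phi.
Proof.
move=> hphi hQS; rewrite /dotp big_distrlr /=; apply: eq_bigr => u _.
apply: eq_bigr => v _.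
case: (boolP (supp Q u)) => hu; last by rewrite (supported0 hphi hu) !rmorph0 !(mul0r, mulr0).
case: (boolP (supp Q v)) => hv; last by rewrite (supported0 hphi hv) !rmorph0 !(mul0r, mulr0).
case: hQS => hQS.
- by rewrite (mix_sub hQS hu hv) (mix_sub hQS hv hu); ring.
- by rewrite (mix_dis hQS hu hv) (mix_dis hQS hv hu); ring.
Qed.

Lemma restrT x : restr [set: 'I_n] x = x.
Proof. by apply/ffunP => i; rewrite ffunE in_setT. Qed.

Lemma suppCC Q x : supp (Q :|: ~: Q) x.
Proof. by rewrite /supp setUCr restrT. Qed.

Lemma tensE Q (a b : conf n -> R[i]) x :
  tens Q (~: Q) a b x = a (restr Q x) * b (restr (~: Q) x).
Proof. by have := suppCC Q x; rewrite /tens /supp => ->. Qed.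

Lemma mix_uni S x y x' y' :
  mix S (uni x y) (uni x' y') = uni (mix S x x') (mix S y y').
Proof. by apply/ffunP => i; rewrite !ffunE; case: ifP. Qed.

Lemma supp_mix Q S u v : supp Q u -> supp Q v -> supp Q (mix S u v).
Proof.
move=> /suppP hu /suppP hv; apply/suppP => i iQ.
by rewrite ffunE; case: ifP => _; [apply: hv | apply: hu].
Qed.

Lemma sum_all Q (F : conf n -> R[i]) :
  \sum_u F u = \sum_(s | supp Q s) \sum_(t | supp (~: Q) t) F (uni s t).
Proof.
rewrite -split_sum; last by rewrite disjoints_subset setCK subxx.
by apply: eq_bigl => u; rewrite suppCC.
Qed.

Lemma purS_tens Q S (a b : conf n -> R[i]) :
  supported Q a -> supported (~: Q) b ->
  purS S (tens Q (~: Q) a b) = purS S a * purS S b.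
Proof.
move=> ha hb.
have dis : [disjoint Q & ~: Q] by rewrite disjoints_subset setCK subxx.
rewrite /purS (sum_all Q).
under eq_bigr => x hx do under eq_bigr => y hy do rewrite (sum_all Q).
rewrite (sum_supp (P := supp Q)); last first.
  by move=> x hx; apply: big1 => x' _; rewrite (supported0 ha hx) rmorph0 !mul0r.
rewrite big_distrl /=; apply: eq_bigr => x hx.
rewrite (sum_supp (P := supp Q)); last first.
  by move=> x' hx'; rewrite (supported0 ha hx') rmorph0 !(mul0r, mulr0).
rewrite big_distrl /= exchange_big /=; apply: eq_bigr => x' hx'.
rewrite (sum_supp (P := supp (~: Q))); last first.
  by move=> y hy; apply: big1 => z _; rewrite (supported0 hb hy) rmorph0 !(mul0r, mulr0).
rewrite big_distrr /=; apply: eq_bigr => y hy.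
rewrite (sum_supp (P := supp (~: Q))); last first.
  by move=> z hz; rewrite (supported0 hb hz) rmorph0 !(mul0r, mulr0).
rewrite big_distrr /=; apply: eq_bigr => y' hy'.
rewrite !mix_uni !tensE.
have [e1 e2] := restr_uni dis hx hy.
have [e3 e4] := restr_uni dis hx' hy'.
have [e5 e6] := restr_uni dis (supp_mix S hx hx') (supp_mix S hy hy').
have [e7 e8] := restr_uni dis (supp_mix S hx' hx) (supp_mix S hy' hy).
rewrite e1 e2 e3 e4 e5 e6 e7 e8 !rmorphM /=; ring.
Qed.


Section Bip.
Variables (Q S : {set 'I_n}) (phi : conf n -> R[i]).
Hypothesis hphi : supported Q phi.
Let D := Q :&: S.
Let G := Q :\: D.

Lemma disDG : [disjoint D & G].
Proof.
rewrite -setI_eq0; apply/eqP/setP => i; rewrite !inE.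
by case: (i \in Q); case: (i \in S).
Qed.

Lemma DGQ : D :|: G = Q.
Proof. by apply/setP => i; rewrite !inE; case: (i \in Q); case: (i \in S). Qed.

Lemma sumQ (f : conf n -> R[i]) : (forall x, ~~ supp Q x -> f x = 0) ->
  \sum_x f x = \sum_s \sum_t (if supp D s && supp G t then f (uni s t) else 0).
Proof.
move=> hf; rewrite (sum_supp (P := supp Q)) // -{1}DGQ split_sum; last exact: disDG.
rewrite big_mkcond /=; apply: eq_bigr => s _.
case: ifP => hs /=; last by rewrite big1.
by rewrite big_mkcond /=; apply: eq_bigr => t _; case: ifP.
Qed.

Definition Amat s t := if supp D s && supp G t then phi (uni s t) else 0.

Lemma Amat0 s t : ~~ (supp D s && supp G t) -> Amat s t = 0.
Proof. by rewrite /Amat => /negbTE ->. Qed.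

Lemma mix_DG s t s' t' : supp D s -> supp G t -> supp D s' -> supp G t' ->
  mix S (uni s t) (uni s' t') = uni s' t.
Proof.
move=> /suppP hs /suppP ht /suppP hs' /suppP ht'.
apply/ffunP => i; rewrite !ffunE.
case: ifP => iS.
- have iG : i \notin G by rewrite !inE iS; case: (i \in Q).
  by rewrite ht ?ht'.
- have iD : i \notin D by rewrite !inE iS; case: (i \in Q).
  by rewrite hs ?hs'.
Qed.

Lemma purS_A : purS S phi = pur Amat.
Proof.
rewrite /purS sumQ; last first.
  by move=> x hx; apply: big1 => v _; rewrite (supported0 hphi hx) rmorph0 !mul0r.
rewrite /pur; apply: eq_bigr => s _; apply: eq_bigr => t _.
case: ifP => hst; last first.
  by rewrite big1 // => s' _; rewrite big1 // => t' _; rewrite Amat0 ?hst // rmorph0 !mul0r.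
rewrite [LHS]sumQ; last first.
  move=> x hx /=; have -> : phi x = 0 := supported0 hphi hx.
  by rewrite rmorph0 !(mul0r, mulr0).
apply: eq_bigr => s' _; apply: eq_bigr => t' _.
case: ifP => hst'; last by rewrite (Amat0 (negbT hst')) rmorph0 !(mul0r, mulr0).
case/andP: hst => hs ht; case/andP: hst' => hs' ht'.
rewrite /Amat hs ht hs' ht' /= (mix_DG hs ht hs' ht') (mix_DG hs' ht' hs ht).
by [].
Qed.

Lemma Amat_norm : dotp phi phi = 1 -> \sum_s \sum_t sq (Amat s t) = 1.
Proof.
move=> <-; rewrite /dotp [RHS]sumQ; last first.
  by move=> x hx /=; rewrite (supported0 hphi hx) rmorph0 mul0r.
apply: eq_bigr => s _; apply: eq_bigr => t _.
by rewrite /Amat /sq; case: ifP; rewrite ?mul0r // mulrC.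
Qed.

Lemma tens_uni (X Y : conf n -> R[i]) s t : supp D s -> supp G t ->
  tens D G X Y (uni s t) = X s * Y t.
Proof.
move=> hs ht; have := supp_uni hs ht; rewrite /tens /supp => ->.
by have [-> ->] := restr_uni disDG hs ht.
Qed.

Lemma far_pur (eps : R) : dotp phi phi = 1 -> D != set0 -> D \proper Q ->
  far_from_mp Q eps phi -> pur Amat <= ((1 - eps ^+ 2)%:C)%C.
Proof.
move=> hn D0 DQ hfar.
have N := Amat_norm hn.
have [X [Y [hX hY sX sY hp]]] := key N.
have suppX : supported D X.
  by move=> x hx; apply: sX => t; apply: Amat0; rewrite /supp (negbTE hx).
have suppY : supported G Y.
  by move=> x hx; apply: sY => s; apply: Amat0; rewrite /supp (negbTE hx) andbF.
have pX : pure_state D X.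
  by split=> //; rewrite /dotp -hX; apply: eq_bigr => x _; rewrite /sq mulrC.
have pY : pure_state G Y.
  by split=> //; rewrite /dotp -hY; apply: eq_bigr => x _; rewrite /sq mulrC.
set chi := tens D G X Y.
have chi0 x : ~~ supp Q x -> chi x = 0.
  by rewrite /chi /tens DGQ /supp => /negbTE ->.
have mp : multipartite_product Q chi.
  split; last first.
    by exists D; split=> //; exists X, Y; split.
  split; first by move=> x hx; apply: chi0.
  rewrite /dotp sumQ; last by move=> x hx /=; rewrite chi0 // rmorph0 mul0r.
  rewrite -[1]mulr1 -{1}hX -hY big_distrlr /=.
  apply: eq_bigr => s _; apply: eq_bigr => t _.
  case: ifP => hst.
    by case/andP: hst => hs ht; rewrite /chi tens_uni // -sqM /sq mulrC.
  case/nandP: (negbT hst) => h.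
    by rewrite (suppX s h) /sq !(mul0r, mulr0, rmorph0).
  by rewrite (suppY t h) /sq !(mul0r, mulr0, rmorph0).
have := hfar chi mp.
have -> : dotp phi chi = \sum_s \sum_t (Amat s t)^* * X s * Y t.
  rewrite /dotp sumQ; last by move=> x hx /=; rewrite (supported0 hphi hx) rmorph0 mul0r.
  apply: eq_bigr => s _; apply: eq_bigr => t _.
  case: ifP => hst; last by rewrite Amat0 ?hst // rmorph0 !mul0r.
  by case/andP: hst => hs ht; rewrite /chi tens_uni // /Amat hs ht mulrA.
rewrite normCK => h; exact: le_trans hp h.
Qed.

End Bip.

End Conf.


Lemma set_case (T : finType) (Cs S : {set T}) : S != set0 -> S != [set: T] ->
  S != Cs -> S != ~: Cs ->
  ((Cs :&: S != set0) && (Cs :&: S \proper Cs)) ||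
  ((~: Cs :&: S != set0) && (~: Cs :&: S \proper ~: Cs)).
Proof.
move=> h0 hT hC hC'.
rewrite !properEneq !subsetIl !andbT.
case: (boolP ((Cs :&: S != set0) && (Cs :&: S != Cs))) => //= hn.
have e12 : (forall i, (i \in Cs :&: S) = (i \in set0)) \/
           (forall i, (i \in Cs :&: S) = (i \in Cs)).
  by move: hn; rewrite negb_and !negbK => /orP [/eqP/setP|/eqP/setP]; [left|right].
apply/andP; split; apply/negP => /eqP/setP e3.
- case: e12 => e.
  + move/eqP: h0; apply; apply/setP => i; move: (e i) (e3 i); rewrite !inE.
    by case: (i \in Cs); case: (i \in S).
  + move/eqP: hC; apply; apply/setP => i; move: (e i) (e3 i); rewrite !inE.
    by case: (i \in Cs); case: (i \in S).
- case: e12 => e.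
  + move/eqP: hC'; apply; apply/setP => i; move: (e i) (e3 i); rewrite !inE.
    by case: (i \in Cs); case: (i \in S).
  + move/eqP: hT; apply; apply/setP => i; move: (e i) (e3 i); rewrite !inE.
    by case: (i \in Cs); case: (i \in S).
Qed.

Section Q.
Variables (R : realType) (n : nat) (Cs S : {set 'I_n}) (a b : conf n -> R[i]).
Hypotheses (ha : pure_state Cs a) (hb : pure_state (~: Cs) b).

Lemma q_one : (S = Cs \/ S = ~: Cs) -> purS S (tens Cs (~: Cs) a b) = 1.
Proof.
case: ha => sa na; case: hb => sb nb.
have dis : [disjoint Cs & ~: Cs] by rewrite disjoints_subset setCK subxx.
have dis' : [disjoint ~: Cs & Cs] by rewrite disjoints_subset subxx.
move=> hS; rewrite (purS_tens S) //.
case: hS => ->.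
- by rewrite (purS_triv sa (or_introl (subxx _))) (purS_triv sb (or_intror dis')) na nb !mulr1.
- by rewrite (purS_triv sa (or_intror dis)) (purS_triv sb (or_introl (subxx _))) na nb !mulr1.
Qed.

Lemma pur_props Q (phi : conf n -> R[i]) : pure_state Q phi ->
  0 <= purS S phi /\ purS S phi <= 1.
Proof.
case=> sp np; rewrite (purS_A S sp); split; first exact: pur_ge0.
exact: pur_le1 (Amat_norm S sp np).
Qed.

Lemma q_bound (eps : R) : far_from_mp Cs eps a -> far_from_mp (~: Cs) eps b ->
  S != set0 -> S != [set: 'I_n] -> S <> Cs -> S <> ~: Cs ->
  0 <= purS S (tens Cs (~: Cs) a b) /\
  purS S (tens Cs (~: Cs) a b) <= ((1 - eps ^+ 2)%:C)%C.
Proof.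
move=> fa fb h0 hT hC hC'.
case: ha => sa na; case: hb => sb nb.
rewrite (purS_tens S) //.
have [pa0 pa1] := pur_props ha.
have [pb0 pb1] := pur_props hb.
split; first exact: mulr_ge0.
have := set_case h0 hT (introN eqP hC) (introN eqP hC').
case/orP => /andP [d0 dp].
- have h := far_pur sa na d0 dp fa; rewrite -(purS_A S sa) in h.
  apply: le_trans h; rewrite -[X in _ <= X]mulr1; exact: ler_wpM2l.
- have h := far_pur sb nb d0 dp fb; rewrite -(purS_A S sb) in h.
  apply: le_trans h; rewrite -[X in _ <= X]mul1r; exact: ler_wpM2r.
Qed.

End Q.


Section Copies.
Variables (R : realType) (n m : nat) (S : {set 'I_n}).
Notation pc := (conf n * conf n)%type.

Definition pr (y : copies n (m + m)%N) (j : 'I_m) : pc :=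
  (y (lshift m j), y (rshift m j)).

Definition unpr (f : {ffun 'I_m -> pc}) : copies n (m + m)%N :=
  [ffun i => match split i with inl j => (f j).1 | inr j => (f j).2 end].

Lemma pr_unpr f j : pr (unpr f) j = f j.
Proof.
have e1 : split (lshift m j) = inl j := unsplitK (inl _ j).
have e2 : split (rshift m j) = inr j := unsplitK (inr _ j).
by rewrite /pr /unpr !ffunE e1 e2; case: (f j).
Qed.

Lemma unpr_pr y : unpr [ffun j => pr y j] = y.
Proof.
apply/ffunP => i; rewrite ffunE.
case: splitP => j e; rewrite ffunE /pr /=; congr (y _); apply: val_inj => //=.
Qed.

Lemma sum_copies (F : 'I_m -> pc -> R[i]) :
  \sum_(y : copies n (m + m)%N) \prod_j F j (pr y j) = \prod_j \sum_p F j p.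
Proof.
rewrite bigA_distr_bigA /=.
rewrite (reindex unpr) /=; last first.
  exists (fun y => [ffun j => pr y j]) => [f _|y _]; last exact: unpr_pr.
  by apply/ffunP => j; rewrite ffunE pr_unpr.
by apply: eq_bigr => f _; apply: eq_bigr => j _; rewrite pr_unpr.
Qed.

End Copies.

Section Proj.
Variables (R : realType) (n m : nat) (S : {set 'I_n}).
Notation pc := (conf n * conf n)%type.

Definition sw (p : pc) : pc := (mix S p.1 p.2, mix S p.2 p.1).

Lemma mixK u v : mix S (mix S u v) (mix S v u) = u.
Proof. by apply/ffunP => i; rewrite !ffunE; case: (i \in S). Qed.

Lemma swK : involutive sw.
Proof. by case=> u v; rewrite /sw /= !mixK. Qed.

Lemma sw_eq p r : (p == sw r) = (sw p == r).
Proof. by apply/eqP/eqP => [->|<-]; rewrite swK. Qed.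

Definition K (p r : pc) : R[i] := ((p == r)%:R + (sw p == r)%:R) / 2.

Lemma sum_delta (a : pc) (F : pc -> R[i]) : \sum_x (a == x)%:R * F x = F a.
Proof.
rewrite (bigD1 a) //= eqxx mul1r big1 ?addr0 // => x hx.
by rewrite eq_sym (negbTE hx) mul0r.
Qed.

Lemma K_apply p (f : pc -> R[i]) : \sum_r K p r * f r = (f p + f (sw p)) / 2.
Proof.
rewrite (eq_bigr (fun r => ((p == r)%:R * f r + (sw p == r)%:R * f r) / 2)); last first.
  by move=> r _; rewrite /K; ring.
by rewrite -mulr_suml big_split /= !sum_delta.
Qed.

Lemma K_sym p r : K p r = K r p.
Proof. by rewrite /K [p == r]eq_sym -sw_eq [p == sw r]eq_sym. Qed.

Lemma K_sw p r : K (sw p) r = K p r.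
Proof. by rewrite /K swK -sw_eq addrC. Qed.

Lemma K_conj p r : (K p r)^* = K p r.
Proof. by rewrite /K fmorph_div /= rmorphD /= !rmorph_nat. Qed.

Lemma K_idem p r : \sum_q K p q * K q r = K p r.
Proof.
rewrite (eq_bigr (fun q => K q r * (K p q))); last by move=> q _; rewrite mulrC.
rewrite (eq_bigr (fun q => K p q * K q r)) //; last by move=> q _; rewrite mulrC.
by rewrite (K_apply p (fun q => K q r)) K_sw; field.
Qed.

Definition Pop : operator R n (m + m)%N :=
  fun y z => \prod_(j < m) K (pr y j) (pr z j).

Lemma Pop_proj : projector Pop.
Proof.
split.
- move=> y z; rewrite /Pop rmorph_prod /=; apply: eq_bigr => j _.
  by rewrite K_conj K_sym.
- move=> y w; rewrite /Pop.
  under eq_bigr => z _ do rewrite -big_split /=.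
  rewrite (sum_copies (fun j p => K (pr y j) p * K p (pr w j))).
  by apply: eq_bigr => j _; rewrite K_idem.
Qed.

End Proj.

Section Outcome.
Variables (R : realType) (n m : nat) (S : {set 'I_n}).
Notation pc := (conf n * conf n)%type.
Variable psi : conf n -> R[i].
Hypothesis hpsi : dotp psi psi = 1.

Definition psi2 (p : pc) := psi p.1 * psi p.2.

Lemma tp_pr y : @tensor_power R n (m + m)%N psi y = \prod_(j < m) psi2 (pr y j).
Proof. by rewrite /tensor_power big_split_ord /= -big_split. Qed.

Lemma factorE : \sum_p \sum_r (psi2 p)^* * K R S p r * psi2 r = (1 + purS S psi) / 2.
Proof.
rewrite (eq_bigr (fun p => (psi2 p)^* * ((psi2 p + psi2 (sw S p)) / 2))); last first.
  move=> p _; rewrite -(K_apply S p psi2) mulr_sumr.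
  by under [RHS]eq_bigr => r _ do rewrite mulrA.
rewrite (eq_bigr (fun p => ((psi2 p)^* * psi2 p + (psi2 p)^* * psi2 (sw S p)) / 2)); last first.
  by move=> p _; ring.
rewrite -mulr_suml big_split /=; congr ((_ + _) / 2).
- rewrite -(pair_bigA _ (fun u v => (psi2 (u, v))^* * psi2 (u, v))) /=.
  rewrite -[1]mulr1 -{1}hpsi -hpsi /dotp big_distrlr /=.
  apply: eq_bigr => u _; apply: eq_bigr => v _.
  by rewrite /psi2 /= rmorphM /=; ring.
- rewrite -(pair_bigA _ (fun u v => (psi2 (u, v))^* * psi2 (sw S (u, v)))) /=.
  apply: eq_bigr => u _; apply: eq_bigr => v _.
  by rewrite /psi2 /= rmorphM /=; ring.
Qed.

Lemma outcome_formula :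
  outcome_prob (@Pop R n m S) (@tensor_power R n (m + m)%N psi) = ((1 + purS S psi) / 2) ^+ m.
Proof.
rewrite /outcome_prob.
under eq_bigr => y _ do under eq_bigr => z _ do
  rewrite !tp_pr rmorph_prod /Pop -!big_split /=.
under eq_bigr => y _ do
  rewrite (sum_copies (fun j r => (psi2 (pr y j))^* * K R S (pr y j) r * psi2 r)).
rewrite (sum_copies (fun j p => \sum_r (psi2 p)^* * K R S p r * psi2 r)).
by rewrite factorE prodr_const card_ord.
Qed.

End Outcome.


Lemma dotp_tens (R : realType) n (Cs : {set 'I_n}) (a b : conf n -> R[i]) :
  pure_state Cs a -> pure_state (~: Cs) b ->
  dotp (tens Cs (~: Cs) a b) (tens Cs (~: Cs) a b) = 1.
Proof.
move=> [sa na] [sb nb].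
set psi := tens Cs (~: Cs) a b.
have spsi : supported [set: 'I_n] psi by move=> x; rewrite restrT eqxx.
have e : purS [set: 'I_n] psi = dotp psi psi * dotp psi psi.
  by apply: (purS_triv spsi); left; apply: subxx.
have e1 : purS [set: 'I_n] psi = 1.
  rewrite /psi (purS_tens [set: 'I_n] sa sb).
  rewrite (purS_triv sa (or_introl (subsetT _))) (purS_triv sb (or_introl (subsetT _))).
  by rewrite na nb !mulr1.
have ge0 : 0 <= dotp psi psi.
  by apply: sumr_ge0 => x _; rewrite mulrC; apply: mul_conjC_ge0.
move: e; rewrite e1 => /esym /eqP; rewrite -expr2 sqrf_eq1 => /orP [/eqP //|/eqP h].
by move: ge0; rewrite h ler0N1.
Qed.

Lemma final_bound (R : realType) (m : nat) (eps : R) (q : R[i]) :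
  0 <= q -> q <= ((1 - eps ^+ 2)%:C)%C ->
  ((1 + q) / 2) ^+ m <= ((expR (- (eps ^+ 2 * m%:R / 2)))%:C)%C.
Proof.
move=> q0 q1.
have x0 : 0 <= (1 + q) / 2 by apply: divr_ge0; [apply: addr_ge0 | apply: ler0n].
have hxy : (1 + q) / 2 <= ((1 - eps ^+ 2 / 2)%:C)%C.
  have -> : ((1 - eps ^+ 2 / 2)%:C)%C = (1 + ((1 - eps ^+ 2)%:C)%C) / 2.
    rewrite -(rmorph1 (real_complex R)) -rmorphD /=.
    rewrite -[2 : R[i]](rmorph_nat (real_complex R)) -fmorph_div /=.
    by congr (_%:C)%C; field.
  by rewrite ler_pM2r ?invr_gt0 ?ltr0n // lerD2l.
have y0 : 0 <= ((1 - eps ^+ 2 / 2)%:C)%C by apply: le_trans hxy.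
apply: le_trans (lerXn2r m _ _ hxy) _; rewrite ?nnegrE //.
have -> : - (eps ^+ 2 * m%:R / 2) = (- (eps ^+ 2 / 2)) * m%:R by field.
rewrite expRM_natr -!rmorphXn /= lecR.
have y0' : 0 <= 1 - eps ^+ 2 / 2.
  by move: y0; rewrite -[0 : R[i]](rmorph0 (real_complex R)) lecR.
apply: lerXn2r; rewrite ?nnegrE ?expR_ge0 //.
by have := expR_ge1Dx (- (eps ^+ 2 / 2)).
Qed.

Lemma main_k (R : realType) (n m k : nat) (S : {set 'I_n}) : k = (m + m)%N ->
  (0 < m)%N -> S != set0 -> S != [set: 'I_n] ->
  exists P : operator R n k,
    projector P /\
    forall (C : {set 'I_n}) (eps : R) (a b : conf n -> R[i]),
      C != set0 -> C != [set: 'I_n] ->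
      pure_state C a -> pure_state (~: C) b ->
      far_from_mp C eps a -> far_from_mp (~: C) eps b ->
      let psi := tens C (~: C) a b in
      let p := outcome_prob P (@tensor_power R n k psi) in
      ((S = C \/ S = ~: C) -> p = 1) /\
      (S <> C -> S <> ~: C -> p <= ((expR (- (eps ^+ 2 * m%:R / 2)))%:C)%C).
Proof.
move=> -> m0 S0 ST; exists (@Pop R n m S); split; first exact: Pop_proj.
move=> Cs eps a b C0 CT ha hb fa fb psi p.
have hp : p = ((1 + purS S psi) / 2) ^+ m.
  by rewrite /p outcome_formula //; apply: dotp_tens.
rewrite hp; split.
- move=> hS; rewrite /psi q_one //.
  have -> : (1 + 1 : R[i]) / 2 = 1 by field.
  by rewrite expr1n.
- move=> hC hC'.
  have [q0 q1] := q_bound ha hb fa fb S0 ST hC hC'.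
  exact: final_bound.
Qed.

Unset Implicit Arguments.

Theorem proposition2p19 (R : realType) (n m : nat) (S : {set 'I_n}) :
  (0 < m)%N -> S != set0 -> S != [set: 'I_n] ->
  exists P : operator R n (2 * m)%N,
    projector P /\
    forall (C : {set 'I_n}) (eps : R) (a b : conf n -> R[i]),
      C != set0 -> C != [set: 'I_n] ->
      pure_state C a -> pure_state (~: C) b ->
      far_from_mp C eps a -> far_from_mp (~: C) eps b ->
      let psi := tens C (~: C) a b in
      let p := outcome_prob P (@tensor_power R n (2 * m)%N psi) in
      ((S = C \/ S = ~: C) -> p = 1) /\
      (S <> C -> S <> ~: C -> p <= ((expR (- (eps ^+ 2 * m%:R / 2)))%:C)%C).
Proof.
apply: main_k.
by rewrite mul2n addnn.
Qed.
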